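(* Let $D$ be a finite oriented graph and let $\delta$ be a density function of $D$. Then the subgraph of $D$ induced by the support of $\delta$ is an orientation of a blow-up of $K_k$, for some $k\geq 2$, such that the sum of $\delta(u)$ over all copies $u$ of the same vertex of $K_k$ equals $1/k$.
   Context: An oriented graph is a digraph $(V,E)$, $E\subseteq V^2$, that is irreflexive with antisymmetric edge relation. A density function of a finite digraph $D$ is a probability distribution $\delta\colon V(D)\to[0,1]$ (with $\sum_v\delta(v)=1$) maximizing $\sum_{(u,v)\in E(D)}\delta(u)\delta(v)$; its support is $\{v:\delta(v)>0\}$. A blow-up of $K_k$ is obtained from $K_k$ by replacing each vertex $u$ by a non-empty set of copies of $u$, each copy having the same neighbours as $u$ and no edges among copies of the same vertex. An orientation of an undirected graph $G$ is a digraph having, for each edge $\{x,y\}$ of $G$, exactly one of $(x,y),(y,x)$ as an edge, and no other edges. *)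

(* Defs.v *)
From mathcomp Require Import all_boot all_order all_algebra.
Set Implicit Arguments. Unset Strict Implicit. Unset Printing Implicit Defensive.
Import Order.TTheory GRing.Theory Num.Theory.
Local Open Scope ring_scope.

(* A finite digraph is a finType V with an edge relation E : rel V
   ((u,v) is an edge iff E u v). *)

Definition oriented (V : finType) (E : rel V) : Prop :=
  irreflexive E /\ (forall x y : V, E x y -> ~~ E y x).

Definition prob_distr (R : realFieldType) (V : finType) (d : V -> R) : Prop :=
  (forall v, 0 <= d v) /\ \sum_(v : V) d v = 1.

Definition edge_density (R : realFieldType) (V : finType) (E : rel V)
    (d : V -> R) : R :=
  \sum_(u : V) \sum_(v : V | E u v) d u * d v.

Definition density_function (R : realFieldType) (V : finType) (E : rel V)
    (d : V -> R) : Prop :=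
  prob_distr d /\
  (forall d' : V -> R, prob_distr d' -> edge_density E d' <= edge_density E d).

Definition supp (R : realFieldType) (V : finType) (d : V -> R) : {set V} :=
  [set v | d v > 0].

(* The subgraph of (V,E) induced by S is an orientation of a blow-up of K_k,
   with f assigning to each vertex of S the vertex of K_k it is a copy of:
   every vertex of K_k has at least one copy in S; copies of the same vertex
   are non-adjacent; copies of distinct vertices are joined by exactly one of
   the two arcs. *)
Definition orient_blowup_K (V : finType) (E : rel V) (S : {set V}) (k : nat)
    (f : V -> 'I_k) : Prop :=
  (forall i : 'I_k, exists2 v, v \in S & f v = i) /\
  (forall u v, u \in S -> v \in S ->
     (f u = f v -> ~~ E u v) /\ (f u <> f v -> E u v (+) E v u)).

(* Main.v *)
Require Import Defs.
From mathcomp Require Import all_boot all_order all_algebra.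
From mathcomp Require Import ring lra zify.
Set Implicit Arguments. Unset Strict Implicit. Unset Printing Implicit Defensive.
Import Order.TTheory GRing.Theory Num.Theory.
Local Open Scope ring_scope.

Section Quad.
Variables (R : realFieldType) (V : finType) (E : rel V).

Definition Bf (x y : V -> R) := \sum_u \sum_(v | E u v) x u * y v.
Definition ev (a : V) : V -> R := fun x => (x == a)%:R.
Definition qadd (x y : V -> R) := fun z => x z + y z.
Definition qscl (c : R) (x : V -> R) := fun z => c * x z.

Lemma BDl x y z : Bf (qadd x y) z = Bf x z + Bf y z.
Proof.
rewrite /Bf -big_split /=; apply: eq_bigr => u _; rewrite -big_split.
by apply: eq_bigr => v _; rewrite /qadd mulrDl.
Qed.
Lemma BDr x y z : Bf z (qadd x y) = Bf z x + Bf z y.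
Proof.
rewrite /Bf -big_split /=; apply: eq_bigr => u _; rewrite -big_split.
by apply: eq_bigr => v _; rewrite /qadd mulrDr.
Qed.
Lemma BZl c x y : Bf (qscl c x) y = c * Bf x y.
Proof.
rewrite /Bf mulr_sumr; apply: eq_bigr => u _; rewrite mulr_sumr.
by apply: eq_bigr => v _; rewrite /qscl mulrA.
Qed.
Lemma BZr c x y : Bf x (qscl c y) = c * Bf x y.
Proof.
rewrite /Bf mulr_sumr; apply: eq_bigr => u _; rewrite mulr_sumr.
by apply: eq_bigr => v _; rewrite /qscl mulrCA.
Qed.
Lemma Bee a b : Bf (ev a) (ev b) = (E a b)%:R.
Proof.
rewrite /Bf (bigD1 a) //= [X in _ + X]big1 ?addr0; last first.
  by move=> u /negbTE ua; apply: big1 => v _; rewrite /ev ua mul0r.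
rewrite /ev eqxx big_mkcond (bigD1 b) //= [X in _ + X]big1 ?addr0.
  by case: (E a b); rewrite ?eqxx ?mul1r.
by move=> v /negbTE vb; rewrite vb mulr0; case: ifP.
Qed.
Lemma sum_ev a : \sum_x ev a x = 1.
Proof. by rewrite (bigD1 a) //= big1 ?addr0 /ev ?eqxx // => x /negbTE ->. Qed.
Lemma sum_qadd x y : \sum_z qadd x y z = \sum_z x z + \sum_z y z.
Proof. by rewrite -big_split. Qed.
Lemma sum_qscl c x : \sum_z qscl c x z = c * \sum_z x z.
Proof. by rewrite mulr_sumr. Qed.
Lemma ev_ge0 a x : 0 <= ev a x.
Proof. by rewrite /ev ler0n. Qed.
Lemma ev_le1 a x : ev a x <= 1.
Proof. by rewrite /ev; case: (x == a). Qed.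
Lemma b_le1 (b : bool) : (b%:R : R) <= 1.
Proof. by case: b. Qed.

Lemma Bexp d t y :
  Bf (qadd d (qscl t y)) (qadd d (qscl t y)) =
  Bf d d + t * (Bf d y + Bf y d) + t ^+ 2 * Bf y y.
Proof. rewrite !BDl !BDr !BZl !BZr; ring. Qed.

End Quad.
Section Main.
Variables (R : realFieldType) (V : finType) (E : rel V) (d : V -> R).
Hypothesis Eor : oriented E.
Hypothesis Hd : density_function E d.

Definition g u := Bf E d (ev R u) + Bf E (ev R u) d.

Lemma d_ge0 x : 0 <= d x.
Proof. by case: Hd => [[]]. Qed.
Lemma d_sum : \sum_x d x = 1.
Proof. by case: Hd => [[]]. Qed.

Lemma perturb (y : V -> R) t : \sum_x y x = 0 ->
  (forall x, 0 <= d x + t * y x) ->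
  t * (Bf E d y + Bf E y d) + t ^+ 2 * Bf E y y <= 0.
Proof.
move=> sy nn.
have P : prob_distr (qadd d (qscl t y)).
  split=> [x|]; first exact: nn.
  by rewrite sum_qadd sum_qscl sy mulr0 addr0 d_sum.
have := Hd.2 _ P; rewrite /edge_density -/(Bf E _ _) -/(Bf E d d) Bexp.
move=> H; lra.
Qed.

Lemma kkt u v : 0 < d v -> g u <= g v.
Proof.
move=> dv; rewrite leNgt; apply/negP => H.
pose y := qadd (ev R u) (qscl (-1) (ev R v)).
have sy : \sum_x y x = 0 by rewrite sum_qadd sum_qscl !sum_ev; ring.
have gy : Bf E d y + Bf E y d = g u - g v.
  rewrite /y /g !BDl !BDr !BZl !BZr; ring.
have byy : -2 <= Bf E y y.
  rewrite /y !BDl !BDr !BZl !BZr !Bee.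
  have := b_le1 R (E u v); have := b_le1 R (E v u).
  have := ler0n R (E u u); have := ler0n R (E v v). lra.
pose t := Num.min (d v) ((g u - g v) / 4).
have tp : 0 < t by rewrite lt_min dv /= divr_gt0 // subr_gt0.
have : t <= t by [].
rewrite {2}/t le_min => /andP[t1 t2].
have nn : forall x, 0 <= d x + t * y x.
  move=> x; have := d_ge0 x; rewrite /y /qadd /qscl.
  have := ev_ge0 R u x; have := ev_le1 R v x.
  case: (eqVneq x v) => [->|xv]; first by rewrite /ev eqxx; nra.
  rewrite /ev (negbTE xv) mulr0n mulr0 addr0; nra.
have := perturb sy nn; rewrite gy; nra.
Qed.
Lemma g_eq u v : 0 < d u -> 0 < d v -> g u = g v.
Proof. by move=> du dv; apply/eqP; rewrite eq_le !kkt. Qed.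

Definition adj u v := E u v || E v u.

Lemma trans3 u v w : u != v -> v != w -> u != w ->
  0 < d u -> 0 < d v -> 0 < d w ->
  ~~ adj u v -> ~~ adj v w -> ~~ adj u w.
Proof.
move=> uv vw uw du dv dw; rewrite /adj !negb_or => /andP[/negbTE e1 /negbTE e2]
  /andP[/negbTE e3 /negbTE e4].
have irr := Eor.1.
pose y := qadd (qadd (ev R u) (ev R w)) (qscl (-2) (ev R v)).
have sy : \sum_x y x = 0 by rewrite !sum_qadd sum_qscl !sum_ev; ring.
have gy : Bf E d y + Bf E y d = 0.
  have : g u + g w - 2 * g v = 0 by rewrite (g_eq du dv) (g_eq dw dv); ring.
  rewrite /y /g !BDl !BDr !BZl !BZr => H; rewrite -H; ring.
have byy : Bf E y y = (E u w)%:R + (E w u)%:R.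
  rewrite /y !BDl !BDr !BZl !BZr !Bee !irr e1 e2 e3 e4 /=; ring.
pose t := d v / 2.
have tp : 0 < t by rewrite divr_gt0.
have nn : forall x, 0 <= d x + t * y x.
  move=> x; have := d_ge0 x; rewrite /y /qadd /qscl.
  have := ev_ge0 R u x; have := ev_ge0 R w x.
  case: (eqVneq x v) => [->|xv]; first by rewrite /ev eqxx (eq_sym v u) (negbTE uv) (negbTE vw) /t /= !mulr0n; lra.
  rewrite /ev (negbTE xv) mulr0n mulr0 addr0; nra.
have := perturb sy nn; rewrite gy byy mulr0 add0r.
have := ler0n R (E u w); have := ler0n R (E w u).
case: (E u w); case: (E w u) => //= *; nra.
Qed.
Definition Rl u v := ~~ adj u v.
Let S := supp d.

Lemma inS x : (x \in S) = (0 < d x).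
Proof. by rewrite /S /supp inE. Qed.

Lemma notS x : x \notin S -> d x = 0.
Proof. by rewrite inS => H; apply/eqP; rewrite eq_le d_ge0 andbT leNgt. Qed.

Lemma Rl_sym u v : Rl u v = Rl v u.
Proof. by rewrite /Rl /adj orbC. Qed.

Lemma Rl_refl u : Rl u u.
Proof. by rewrite /Rl /adj Eor.1. Qed.

Lemma Rl_trans a b c : a \in S -> b \in S -> c \in S -> Rl a b -> Rl b c -> Rl a c.
Proof.
rewrite !inS => Sa Sb Sc.
case: (eqVneq a b) => [->|ab] //; case: (eqVneq b c) => [<-|bc] //.
case: (eqVneq a c) => [->|ac]; first by rewrite Rl_refl.
exact: trans3.
Qed.

Lemma Rl_equiv : {in S & &, equivalence_rel Rl}.
Proof.
move=> x y z Sx Sy Sz; split; first exact: Rl_refl.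
move=> Rxy; apply/idP/idP => H.
  by apply: (Rl_trans Sy Sx Sz) => //; rewrite Rl_sym.
exact: (Rl_trans Sx Sy Sz).
Qed.

Lemma S_nonempty : exists v, v \in S.
Proof.
apply/existsP; apply/negP => /existsP H.
have : \sum_x d x = 0.
  by apply: big1 => x _; apply: notS; apply/negP => Sx; apply: H; exists x.
by rewrite d_sum => /eqP; rewrite oner_eq0.
Qed.

Lemma blowup : exists k (f : V -> 'I_k),
  (forall i, exists2 v, v \in S & f v = i) /\
  {in S &, forall u v, (f u == f v) = Rl u v}.
Proof.
pose P := equivalence_partition Rl S.
have /and3P [/eqP covP tiP s0P] := equivalence_partitionP Rl_equiv.
have [v0 Sv0] := S_nonempty.
have X0 : pblock P v0 \in P by apply: pblock_mem; rewrite covP.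
exists #|P|, (fun v => enum_rank_in X0 (pblock P v)); split.
  move=> i; have BP := enum_valP i.
  case: (set_0Vmem (enum_val i)) => [E0|[x xB]].
    by move: s0P; rewrite -E0 BP.
  have px : pblock P x = enum_val i by apply: def_pblock.
  exists x; last by rewrite px enum_valK_in.
  by rewrite -covP -mem_pblock px.
move=> u v Su Sv.
have Pu : pblock P u \in P by apply: pblock_mem; rewrite covP.
have Pv : pblock P v \in P by apply: pblock_mem; rewrite covP.
rewrite (can_in_eq (enum_rankK_in X0)) //.
rewrite eq_pblock // ?covP //.
exact: (pblock_equivalence_partition Rl_equiv Su Sv).
Qed.
Lemma B_ev_l a y : Bf E (ev R a) y = \sum_(v | E a v) y v.
Proof.
rewrite /Bf (bigD1 a) //= [X in _ + X]big1 ?addr0.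
  by apply: eq_bigr => v _; rewrite /ev eqxx mul1r.
by move=> u /negbTE ua; apply: big1 => v _; rewrite /ev ua mul0r.
Qed.

Lemma B_ev_r x b : Bf E x (ev R b) = \sum_(u | E u b) x u.
Proof.
rewrite /Bf [RHS]big_mkcond; apply: eq_bigr => u _.
rewrite big_mkcond (bigD1 b) //= [X in _ + X]big1 ?addr0.
  by rewrite /ev eqxx mulr1.
by move=> v /negbTE vb; rewrite /ev vb mulr0; case: ifP.
Qed.

Lemma g_adj u : g u = \sum_(x | adj u x) d x.
Proof.
rewrite /g B_ev_l B_ev_r (big_mkcond (fun x => E x u)) (big_mkcond (fun x => E u x)) (big_mkcond (adj u)) -big_split /=.
apply: eq_bigr => x _; rewrite /adj.
case Exu: (E x u); case Eux: (E u x) => /=; rewrite ?addr0 ?add0r //.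
by have := Eor.2 _ _ Exu; rewrite Eux.
Qed.

Lemma s_val k (f : V -> 'I_k) :
  {in S &, forall u v, (f u == f v) = Rl u v} ->
  forall u, u \in S -> \sum_(x in S | f x == f u) d x = 1 - g u.
Proof.
move=> eqf u Su; rewrite g_adj -d_sum [X in _ = X - _](bigID (adj u)) /= [X in _ = X]addrC addKr.
rewrite [LHS]big_mkcond [RHS]big_mkcond; apply: eq_bigr => x _.
case Sx: (x \in S) => /=; last by rewrite notS ?Sx //; case: ifP.
by rewrite eqf // Rl_sym /Rl.
Qed.
Lemma dens_pos : (exists u v, E u v) -> 1/4 <= Bf E d d.
Proof.
case=> a [b Eab].
pose y := qscl (1/2) (qadd (ev R a) (ev R b)).
have P : prob_distr y.
  split=> [x|]; last by rewrite sum_qscl sum_qadd !sum_ev; field.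
  rewrite /y /qscl /qadd; apply: mulr_ge0; first lra.
  by apply: addr_ge0; apply: ev_ge0.
have := Hd.2 _ P; rewrite /edge_density -/(Bf E _ _) -/(Bf E d d).
rewrite /y !BZl !BZr !BDl !BDr !Bee !Eor.1 Eab.
have -> : E b a = false by apply/negbTE; apply: Eor.2.
move=> H; apply: le_trans H; rewrite /=; lra.
Qed.

Lemma main_sec : (exists u v, E u v) ->
  exists k : nat, exists f : V -> 'I_k,
    (2 <= k)%N /\
    orient_blowup_K E (supp d) f /\
    (forall i : 'I_k, \sum_(u in supp d | f u == i) d u = k%:R^-1).
Proof.
move=> Hex.
have [k [f [surj eqf]]] := blowup.
have [v0 Sv0] := S_nonempty.
have k2 : (2 <= k)%N.
  rewrite leqNgt; apply/negP => k1.
  have feq : forall i j : 'I_k, i = j.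
    move=> i j; apply: ord_inj; have := ltn_ord i; have := ltn_ord j.
    move: k1; clear; lia.
  have := dens_pos Hex.
  have -> : Bf E d d = 0.
    apply: big1 => u _; apply: big1 => v Euv.
    case Su: (u \in S); last by rewrite notS ?Su // mul0r.
    case Sv: (v \in S); last by rewrite (@notS v) ?Sv // mulr0.
    have := eqf u v Su Sv; rewrite (feq (f u) (f v)) eqxx /Rl /adj Euv //.
  lra.
exists k, f; split => //; split.
  split => // u v Su Sv; split.
    by move=> fuv; have := eqf u v Su Sv; rewrite fuv eqxx /Rl /adj negb_or => /esym/andP[].
  move=> fuv; have := eqf u v Su Sv; have /eqP/negbTE -> := fuv.
  rewrite /Rl /adj.
  case Euv: (E u v); case Evu: (E v u) => //=.
  by have := Eor.2 _ _ Euv; rewrite Evu.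
have si : forall i, \sum_(x in S | f x == i) d x = 1 - g v0.
  move=> i; have [u Su <-] := surj i.
  rewrite (s_val eqf Su) (g_eq (_ : 0 < d u) (_ : 0 < d v0)) // -inS //.
have tot : \sum_x d x = k%:R * (1 - g v0).
  rewrite (bigID (fun x => x \in S)) /= [X in _ + X]big1 ?addr0; last first.
    by move=> x /notS.
  rewrite (partition_big f xpredT) //=.
  rewrite (eq_bigr (fun _ => 1 - g v0)); last by move=> i _; exact: si.
  by rewrite sumr_const card_ord mulr_natl.
rewrite d_sum in tot.
move=> i; rewrite si.
have k0 : (0 < k)%N by lia.
have kn0 : k%:R != 0 :> R by rewrite pnatr_eq0 -lt0n.
by apply: (mulfI kn0); rewrite mulfV // -tot.
Qed.

End Main.

Theorem lemma4p10 (R : realFieldType) (V : finType) (E : rel V)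
    (d : V -> R) :
  oriented E ->
  (exists u v, E u v) ->
  density_function E d ->
  exists k : nat, exists f : V -> 'I_k,
    (2 <= k)%N /\
    orient_blowup_K E (supp d) f /\
    (forall i : 'I_k, \sum_(u in supp d | f u == i) d u = k%:R^-1).
Proof. by move=> Eor Hex Hd; apply: main_sec. Qed.
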